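(* Let $(n_1,\dots,n_r)$ be an ordered partition of $p$ and let $\mathcal{Z}\subset\mathrm{Sym}(p)$ be a linear subspace such that $\mathrm{BlockDiag}(x)\mathrm{BlockDiag}(y)\in\mathcal{Z}$ for all $x,y\in\mathcal{Z}$. Then for all $x,y\in\mathcal{Z}$, $\mathrm{BlockDiag}(x)\mathrm{BlockDiag}(y)=\mathrm{BlockDiag}(y)\mathrm{BlockDiag}(x)$.
   Context: $\mathrm{Sym}(p)$ is the space of real symmetric $p\times p$ matrices. For $x\in\mathrm{Sym}(p)$ written in blocks $X_{kh}\in\mathbb{R}^{n_k\times n_h}$ according to the partition, $\mathrm{BlockDiag}(x)$ is the block-diagonal matrix with diagonal blocks $X_{11},\dots,X_{rr}$ and zero off-diagonal blocks. *)

(* Defs.v *)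
From HB Require Import structures.
From mathcomp Require Import all_boot all_order all_algebra.
From mathcomp Require Import reals.
Set Implicit Arguments. Unset Strict Implicit. Unset Printing Implicit Defensive.
Import Order.TTheory GRing.Theory Num.Theory.
Local Open Scope ring_scope.

(* Ordered partition (n_0, ..., n_{r-1}) of p.  Index i : 'I_p lies in
   block k iff  n_0 + ... + n_{k-1} <= i < n_0 + ... + n_k. *)
Definition in_block (r : nat) (n : 'I_r -> nat) (k : 'I_r) (i : nat) : bool :=
  ((\sum_(h < r | (h < k)%N) n h)%N <= i < (\sum_(h < r | (h <= k)%N) n h)%N)%N.

Definition BlockDiag (R : nzRingType) (p r : nat) (n : 'I_r -> nat)
    (x : 'M[R]_p) : 'M[R]_p :=
  \matrix_(i < p, j < p)
    (if [exists k : 'I_r, in_block n k i && in_block n k j] then x i j else 0).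

(* Main.v *)
Require Import Defs.
From HB Require Import structures.
From mathcomp Require Import all_boot all_order all_algebra.
From mathcomp Require Import reals.
Import Order.TTheory GRing.Theory Num.Theory.
Local Open Scope ring_scope.

Theorem corollary4p4 (R : realType) (p r : nat) (n : 'I_r -> nat)
    (Hpos : forall k, (0 < n k)%N)
    (Hsum : (\sum_(k < r) n k)%N = p)
    (Z : {vspace 'M[R]_p})
    (HZsym : forall x, x \in Z -> x^T = x)
    (Hclosed : forall x y, x \in Z -> y \in Z ->
       BlockDiag n x *m BlockDiag n y \in Z) :
  forall x y, x \in Z -> y \in Z ->
    BlockDiag n x *m BlockDiag n y = BlockDiag n y *m BlockDiag n x.
Proof.
move=> x y Hx Hy.
have HT : forall z, z \in Z -> (BlockDiag n z)^T = BlockDiag n z.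
  move=> z Hz; apply/matrixP=> i j; rewrite !mxE.
  have -> : [exists k, in_block n k j && in_block n k i] =
            [exists k, in_block n k i && in_block n k j].
    by apply: eq_existsb => k; rewrite andbC.
  case: ifP => // _.
  by move: (congr1 (fun M : 'M[R]_p => M i j) (HZsym z Hz)); rewrite mxE.
have := HZsym _ (Hclosed x y Hx Hy).
by rewrite trmx_mul !HT // => <-.
Qed.
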